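(* Let $G=(A\cup B,E)$ be a bipartite graph with $|A|\le 3$. Then for every ordering $\sigma_A$ of $A$, $G$ admits a Stick representation in which, ordering the horizontal segments by where they touch the ground line from left to right, the $i$th horizontal segment corresponds to the $i$th vertex of $\sigma_A$.
   Context: A Stick representation of a bipartite graph $G=(A\cup B,E)$ (with $A$ horizontal and $B$ vertical) assigns to each vertex of $A$ a horizontal segment and to each vertex of $B$ a vertical segment such that the left endpoints of all horizontal segments and the bottom endpoints of all vertical segments lie on a fixed ground line $\ell$ of slope $-1$, and a horizontal and a vertical segment intersect if and only if the corresponding vertices are adjacent in $G$. *)

(* Defs.v *)
From HB Require Import structures.
From mathcomp Require Import all_boot all_order all_algebra.
From mathcomp Require Import reals.
Set Implicit Arguments. Unset Strict Implicit. Unset Printing Implicit Defensive.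
Import Order.TTheory GRing.Theory Num.Theory.
Local Open Scope ring_scope.

(* Ground line ell : { (x, y) | x + y = 0 }, i.e. y = -x, slope -1.
   A point of ell is determined by its x-coordinate t, namely (t, -t). *)

Definition on_hseg (R : realType) (t l x y : R) : Prop :=
  y = - t /\ t <= x <= t + l.

Definition on_vseg (R : realType) (t l x y : R) : Prop :=
  x = t /\ - t <= y <= - t + l.

(* A Stick representation of the bipartite graph (A u B, E), where
   E : A -> B -> bool is the edge relation (A horizontal, B vertical):
   hx a / hl a = ground x-coordinate / length of the horizontal segment of a,
   vx b / vl b = ground x-coordinate / length of the vertical segment of b. *)
Definition is_stick_rep (R : realType) (A B : finType) (E : A -> B -> bool)
    (hx hl : A -> R) (vx vl : B -> R) : Prop :=
  (forall a, 0 < hl a) /\ (forall b, 0 < vl b) /\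
  (forall a b, E a b <->
     exists x y : R, on_hseg (hx a) (hl a) x y /\ on_vseg (vx b) (vl b) x y).

(* Main.v *)
Require Import Defs.
From HB Require Import structures.
From mathcomp Require Import all_boot all_order all_algebra.
From mathcomp Require Import reals.
From mathcomp Require Import lra.
Import Order.TTheory GRing.Theory Num.Theory.
Local Open Scope ring_scope.

Lemma meet_iff (R : realType) (t l s m : R) :
  (exists x y : R, on_hseg t l x y /\ on_vseg s m x y) <->
  ((t <= s) && (s <= t + l) /\ s - m <= t).
Proof.
rewrite /on_hseg /on_vseg; split.
- move=> [x [y [[e1 /andP[h1 h2]] [e2 /andP[h3 h4]]]]]; subst x y.
  split; [apply/andP; split|]; lra.
- move=> [/andP[h1 h2] h3]; exists s, (- t); split; split => //;
    apply/andP; split; lra.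
Qed.

Definition hxf (R : realType) (i : nat) : R :=
  match i with 0 => 0 | 1 => 2 | _ => 4 end.
Definition hlf (R : realType) (i : nat) : R :=
  match i with 0 => 10 | 1 => 4 | _ => 6 end.
Definition vxf (R : realType) (c0 c1 c2 : bool) : R :=
  match c0, c1, c2 with
  | false, false, false => -1
  | true, false, false => 1
  | true, true, false => 3
  | false, true, false => 3
  | true, true, true => 5
  | false, true, true => 5
  | false, false, true => 5
  | true, false, true => 8
  end.
Definition vlf (R : realType) (c0 c1 c2 : bool) : R :=
  match c0, c1, c2 with
  | false, false, false => 1
  | true, false, false => 2
  | true, true, false => 4
  | false, true, false => 2
  | true, true, true => 6
  | false, true, true => 4
  | false, false, true => 2
  | true, false, true => 9
  end.

Lemma key (R : realType) (i : nat) (c0 c1 c2 : bool) : (i < 3)%N ->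
  (match i with 0 => c0 | 1 => c1 | _ => c2 end) <->
  ((hxf R i <= vxf R c0 c1 c2) && (vxf R c0 c1 c2 <= hxf R i + hlf R i)
   /\ vxf R c0 c1 c2 - vlf R c0 c1 c2 <= hxf R i).
Proof.
move=> hi.
case: i hi => [|[|[|i]]] // _; case: c0; case: c1; case: c2; rewrite /=;
  (split; [move=> _; (split; [apply/andP; split|]); lra
          | done])
  || (split; [done | move=> [/andP[? ?] ?]; exfalso; lra]).
Qed.

Lemma hlf_pos (R : realType) i : 0 < hlf R i.
Proof. case: i => [|[|[|]]]; by rewrite /hlf /= ltr0n. Qed.
Lemma vlf_pos (R : realType) c0 c1 c2 : 0 < vlf R c0 c1 c2.
Proof. case: c0; case: c1; case: c2; by rewrite /vlf /= ?ltr01 ?ltr0n. Qed.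
Lemma hxf_mono (R : realType) (i j : nat) : (i < j)%N -> (j < 3)%N -> hxf R i < hxf R j.
Proof. case: i => [|[|[|]]]; case: j => [|[|[|]]] //= *; by rewrite /hxf /= ?ltr0n ?ltr_nat. Qed.

Theorem mainTheorem6 (R : realType) (A B : finType) (E : A -> B -> bool)
    (hA : (#|A| <= 3)%N) (sigma : 'I_#|A| -> A) (hsigma : injective sigma) :
  exists (hx hl : A -> R) (vx vl : B -> R),
    is_stick_rep E hx hl vx vl /\
    (forall i j : 'I_#|A|, (i < j)%N -> hx (sigma i) < hx (sigma j)).
Proof.
have [g sg gs] : bijective sigma by apply: inj_card_bij => //; rewrite card_ord.
pose bit (i : nat) (b : B) := [exists a, (nat_of_ord (g a) == i) && E a b].
have Ebit : forall a b, E a b = bit (g a) b.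
  move=> a b; apply/idP/existsP => [h|[a' /andP[/eqP h1 h2]]].
    by exists a; rewrite eqxx h.
  have : g a' = g a by apply: val_inj.
  by move/(congr1 sigma); rewrite !gs => <-.
exists (fun a => hxf R (g a)), (fun a => hlf R (g a)),
  (fun b => vxf R (bit 0%N b) (bit 1%N b) (bit 2%N b)),
  (fun b => vlf R (bit 0%N b) (bit 1%N b) (bit 2%N b)).
split; [split; [|split]|].
- move=> a; exact: hlf_pos.
- move=> b; exact: vlf_pos.
- move=> a b; rewrite meet_iff Ebit.
  have hi : (g a < 3)%N by apply: leq_trans (ltn_ord _) hA.
  rewrite -(key R _ (bit 0%N b) (bit 1%N b) (bit 2%N b) hi).
  by move: hi; case: (nat_of_ord (g a)) => [|[|[|]]].
- move=> i j hij; rewrite !sg.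
  have hj : (j < 3)%N by apply: leq_trans (ltn_ord _) hA.
  exact: hxf_mono.
Qed.
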